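(* Let $t\ge 2$ be an integer and let $G$ be a graph with $n$ vertices. Then \[ \mu_{t}(G)\leq \frac{t}{n}\binom{n}{t}^{\frac{1}{t}}\left(c_{t}(G)\right)^{\frac{t-1}{t}}, \] where $c_t(G)$ is the number of $t$-cliques of $G$ and $\mu_t(G)$ is the $t$-clique spectral radius of $G$. Furthermore, equality holds if $G$ is a complete graph or a $K_t$-free graph.
   Context: All graphs are simple and undirected. A $t$-clique of a graph $G$ is a set of $t$ vertices inducing a complete subgraph; $C_t(G)$ denotes the set of $t$-cliques and $c_t(G)=|C_t(G)|$. For a graph $G$ with vertex set $\{1,\dots,n\}$, the $t$-clique tensor $\mathcal{A}(G)=(a_{i_1\cdots i_t})$ is the order $t$, dimension $n$ tensor with $a_{i_1 i_2\cdots i_t}=\frac{1}{(t-1)!}$ if $\{i_1,\dots,i_t\}\in C_t(G)$ (in particular the $i_j$ are distinct) and $a_{i_1\cdots i_t}=0$ otherwise. For an order $m$ dimension $n$ tensor $\mathcal{A}$ and $x\in\mathbb{C}^n$, $\mathcal{A}x^{m-1}$ is the vector whose $i$-th component is $\sum_{i_2,\dots,i_m=1}^n a_{i i_2\cdots i_m}x_{i_2}\cdots x_{i_m}$; $\lambda\in\mathbb{C}$ is an eigenvalue of $\mathcal{A}$ if there is a nonzero $x\in\mathbb{C}^n$ with $\mathcal{A}x^{m-1}=\lambda x^{[m-1]}$, where $x^{[m-1]}=(x_1^{m-1},\dots,x_n^{m-1})^T$. The $t$-clique spectral radius $\mu_t(G)$ is the largest modulus of an eigenvalue of the $t$-clique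 tensor of $G$. *)

(* Defs.v *)
From HB Require Import structures.
From mathcomp Require Import all_boot all_order all_algebra.
From mathcomp Require Import all_classical all_reals all_analysis.
From mathcomp Require Import complex.
Set Implicit Arguments. Unset Strict Implicit. Unset Printing Implicit Defensive.
Import Order.TTheory GRing.Theory Num.Theory.
Local Open Scope ring_scope.

(* A simple graph on vertex set 'I_n is given by an adjacency relation e,
   assumed symmetric and irreflexive (hypotheses of the theorem). *)

Definition is_clique (n : nat) (e : rel 'I_n) (A : {set 'I_n}) : bool :=
  [forall x in A, forall y in A, (x != y) ==> e x y].

Definition cliques (n : nat) (e : rel 'I_n) (t : nat) : {set {set 'I_n}} :=
  [set A : {set 'I_n} | is_clique e A && (#|A| == t)].

Definition clique_number (n : nat) (e : rel 'I_n) (t : nat) : nat :=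
  #|cliques e t|.

Definition cmod (R : rcfType) (z : R[i]) : R :=
  let: Complex a b := z in Num.sqrt (a ^+ 2 + b ^+ 2).

(* A tensor of order m, dimension n, with complex entries, indexed by
   sequences (i_1, ..., i_m) of vertices (only sequences of size m matter). *)
Definition tensor (R : rcfType) (n : nat) := seq 'I_n -> R[i].

Definition tensor_apply (R : rcfType) (m n : nat) (A : tensor R n)
    (x : 'I_n -> R[i]) (i : 'I_n) : R[i] :=
  \sum_(g : (m.-1).-tuple 'I_n) A (i :: tval g) * \prod_(j <- tval g) x j.

Definition is_eigenvalue (R : rcfType) (m n : nat) (A : tensor R n)
    (lam : R[i]) : Prop :=
  exists x : 'I_n -> R[i], (exists i, x i != 0) /\
    forall i, tensor_apply m A x i = lam * x i ^+ (m.-1).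

Definition spectral_radius (R : realType) (m n : nat) (A : tensor R n) : R :=
  sup [set cmod lam | lam in [set lam | is_eigenvalue m A lam]]%classic.

Definition clique_tensor (R : rcfType) (n : nat) (e : rel 'I_n) (t : nat)
    : tensor R n :=
  fun s => if (size s == t) && ([set x in s] \in cliques e t)
           then ((t.-1)`!%:R)^-1 else 0.

Definition clique_spectral_radius (R : realType) (n : nat) (e : rel 'I_n)
    (t : nat) : R :=
  spectral_radius t (clique_tensor R e t).

(* Main.v *)
Require Import Defs.
From HB Require Import structures.
From mathcomp Require Import all_boot all_order all_algebra.
From mathcomp Require Import all_classical all_reals all_analysis.
From mathcomp Require Import complex.
From mathcomp Require Import ring lra.
Import Order.TTheory GRing.Theory Num.Theory.
Local Open Scope ring_scope.

Section Gen.
Variable R : realType.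

Lemma sumr_constP (I : finType) (P : pred I) (c : R) :
  \sum_(i | P i) c = #|P|%:R * c.
Proof. by rewrite sumr_const mulr_natl. Qed.

Lemma mono_pow (x y : R) (m : nat) : 0 <= x -> 0 <= y ->
  0 <= (x - y) * (x ^+ m - y ^+ m).
Proof.
move=> x0 y0; have [xy|yx] := leP x y.
  apply: mulr_le0; first by rewrite subr_le0.
  by rewrite subr_le0 lerXn2r // nnegrE.
apply: mulr_ge0; first by rewrite subr_ge0 ltW.
by rewrite subr_ge0 lerXn2r // ?nnegrE // ltW.
Qed.

Lemma cheb (I : finType) (P : pred I) (a : I -> R) (j : nat) :
  (forall i, P i -> 0 <= a i) ->
  (\sum_(i | P i) a i) * (\sum_(i | P i) a i ^+ j.+1)
    <= #|P|%:R * \sum_(i | P i) a i ^+ j.+2.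
Proof.
move=> a0.
have E1 : #|P|%:R * \sum_(i | P i) a i ^+ j.+2
    - (\sum_(i | P i) a i) * (\sum_(i | P i) a i ^+ j.+1)
  = \sum_(i | P i) \sum_(k | P k) (a k ^+ j.+2 - a i * a k ^+ j.+1).
  rewrite -sumr_constP mulr_suml -sumrB; apply: eq_bigr => i _.
  by rewrite mulr_sumr sumrB.
have E2 : #|P|%:R * \sum_(i | P i) a i ^+ j.+2
    - (\sum_(i | P i) a i) * (\sum_(i | P i) a i ^+ j.+1)
  = \sum_(i | P i) \sum_(k | P k) (a i ^+ j.+2 - a k * a i ^+ j.+1).
  rewrite E1 exchange_big /=; done.
suff : 0 <= (#|P|%:R * \sum_(i | P i) a i ^+ j.+2
    - (\sum_(i | P i) a i) * (\sum_(i | P i) a i ^+ j.+1)) *+ 2.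
  by rewrite pmulrn_lge0 // subr_ge0.
rewrite mulr2n {1}E1 E2 -big_split /= sumr_ge0 // => i Pi.
rewrite -big_split /= sumr_ge0 // => k Pk.
have := mono_pow (a k) (a i) j.+1 (a0 _ Pk) (a0 _ Pi).
by rewrite !exprS; nra.
Qed.

Lemma power_mean (I : finType) (P : pred I) (a : I -> R) (j : nat) :
  (forall i, P i -> 0 <= a i) ->
  (\sum_(i | P i) a i) ^+ j.+1 <= #|P|%:R ^+ j * \sum_(i | P i) a i ^+ j.+1.
Proof.
move=> a0; elim: j => [|j IH]; first by rewrite expr0 mul1r.
have s0 : 0 <= \sum_(i | P i) a i by apply: sumr_ge0.
rewrite exprS (le_trans (ler_wpM2l s0 IH)) //.
rewrite mulrCA exprS -mulrA [#|P|%:R * (_ * _)]mulrCA.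
apply: ler_wpM2l; first exact: exprn_ge0.

exact: cheb.
Qed.

End Gen.

Section Mac.
Variable R : realType.
Variables n t : nat.

Definition Psym (z : 'I_n -> R) :=
  \sum_(s : t.-tuple 'I_n | uniq s) \prod_(j <- s) z j.

Definition sw (a b j : 'I_n) := if j == a then b else if j == b then a else j.

Lemma swK a b : involutive (sw a b).
Proof.
move=> j; rewrite /sw.
case: (eqVneq j a) => [->|ja]; first by rewrite eqxx; case: eqVneq.
case: (eqVneq j b) => [->|jb]; first by rewrite eqxx.
by rewrite (negbTE ja) (negbTE jb).
Qed.

Lemma sw_inj a b : injective (sw a b).
Proof. exact: (can_inj (swK a b)). Qed.

Lemma prod_const_seq (s : seq 'I_n) (m : R) :
  \prod_(j <- s) m = m ^+ size s.
Proof. by elim: s => [|x s IH]; rewrite ?big_nil ?big_cons ?IH ?exprS. Qed.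

Lemma prod_split (s : seq 'I_n) (a b : 'I_n) (z : 'I_n -> R) : a != b ->
  \prod_(j <- s) z j =
  (\prod_(j <- s | (j != a) && (j != b)) z j)
     * z a ^+ count_mem a s * z b ^+ count_mem b s.
Proof.
move=> ab; elim: s => [|x s IH]; first by rewrite !big_nil /= !expr0 !mulr1.
rewrite !big_cons IH /=.
case: (eqVneq x a) => [->|xa].
  rewrite (negbTE ab) /= exprS; ring.
case: (eqVneq x b) => [->|xb].
  rewrite /= exprS; ring.
rewrite /=; ring.
Qed.

Lemma Psym_sym (z : 'I_n -> R) a b :
  Psym z + Psym z = \sum_(s : t.-tuple 'I_n | uniq s)
     (\prod_(j <- s) z j + \prod_(j <- s) z (sw a b j)).
Proof.
rewrite big_split /=; congr (_ + _).
rewrite /Psym (reindex_inj (h := fun s : t.-tuple 'I_n => [tuple of map (sw a b) s])).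
  apply: eq_big => s /=; first by rewrite map_inj_uniq //; exact: sw_inj.
  by move=> _; rewrite big_map.
move=> s1 s2 /(congr1 val) /= /(inj_map (@sw_inj a b)) E; exact: val_inj.
Qed.

Lemma Psym_swap (z z' : 'I_n -> R) a b : a != b ->
  (forall i, 0 <= z i) -> (forall i, 0 <= z' i) ->
  (forall i, i != a -> i != b -> z' i = z i) ->
  z a + z b = z' a + z' b -> z a * z b <= z' a * z' b ->
  Psym z <= Psym z'.
Proof.
move=> ab z0 z'0 zz' sab pab.
suff : Psym z + Psym z <= Psym z' + Psym z' by lra.
rewrite (Psym_sym z a b) (Psym_sym z' a b); apply: ler_sum => s us.
rewrite (prod_split s a b z ab) (prod_split s a b (fun j => z (sw a b j)) ab).
rewrite (prod_split s a b z' ab) (prod_split s a b (fun j => z' (sw a b j)) ab).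
have Q1 : \prod_(j <- s | (j != a) && (j != b)) z (sw a b j)
        = \prod_(j <- s | (j != a) && (j != b)) z j.
  by apply: eq_bigr => j /andP[ja jb]; rewrite /sw (negbTE ja) (negbTE jb).
have Q2 : \prod_(j <- s | (j != a) && (j != b)) z' (sw a b j)
        = \prod_(j <- s | (j != a) && (j != b)) z j.
  apply: eq_bigr => j /andP[ja jb]; rewrite /sw (negbTE ja) (negbTE jb).
  exact: zz'.
have Q3 : \prod_(j <- s | (j != a) && (j != b)) z' j
        = \prod_(j <- s | (j != a) && (j != b)) z j.
  by apply: eq_bigr => j /andP[ja jb]; exact: zz'.
rewrite Q1 Q2 Q3.
have Q0 : 0 <= \prod_(j <- s | (j != a) && (j != b)) z j.
  by apply: prodr_ge0 => j _.
move: Q0; set Q := \prod_(_ <- _ | _) _ => Q0.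
have swa : sw a b a = b by rewrite /sw eqxx.
have swb : sw a b b = a by rewrite /sw eqxx eq_sym (negbTE ab).
rewrite swa swb !count_uniq_mem //.
have za := z0 a; have zb := z0 b; have za' := z'0 a; have zb' := z'0 b.
case: (a \in s); case: (b \in s); rewrite /= ?expr0 ?expr1 ?mulr1; nra.
Qed.

Lemma card_uniq_all : #|[pred s : t.-tuple 'I_n | uniq s]| = n ^_ t.
Proof.
have := card_uniq_tuples t (@predT 'I_n).
rewrite card_ord => <-; apply: eq_card => s; rewrite !inE all_predT.
by [].
Qed.

Lemma Psym_const (m : R) : Psym (fun=> m) = (n ^_ t)%:R * m ^+ t.
Proof.
rewrite /Psym (eq_bigr (fun=> m ^+ t)); last first.
  by move=> s _; rewrite prod_const_seq size_tuple.
by rewrite sumr_const mulr_natl card_uniq_all.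
Qed.


Lemma maclaurin (z : 'I_n -> R) : (0 < n)%N -> (forall i, 0 <= z i) ->
  Psym z <= (n ^_ t)%:R * ((\sum_i z i) / n%:R) ^+ t.
Proof.
move=> n0 z0.
set S := \sum_i z i; set m := S / n%:R.
have nR : n%:R != 0 :> R by rewrite pnatr_eq0 -lt0n.
have m0 : 0 <= m by rewrite divr_ge0 // sumr_ge0.
have sumS : forall w : 'I_n -> R, \sum_i w i = S -> \sum_i (w i - m) = 0.
  move=> w wS'; rewrite sumrB wS' sumr_const card_ord -mulr_natr /m.
  by rewrite divfK // subrr.
suff H : forall d (w : 'I_n -> R), (forall i, 0 <= w i) -> \sum_i w i = S ->
    (#|[pred i | w i != m]| <= d)%N -> Psym w <= (n ^_ t)%:R * m ^+ t.
  exact: (H _ z z0 erefl (leqnn _)).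
elim=> [|d IH] w w0 wS.
  rewrite leqn0 => /eqP /card0_eq H.
  have -> : w = fun=> m.
    by apply: funext => i; have := H i; rewrite !inE => /negbFE /eqP.
  by rewrite Psym_const.
rewrite leq_eqVlt => /orP[/eqP cd|]; last by rewrite ltnS; exact: IH.
have [a wa] : exists a, w a < m.
  apply/not_existsP => H.
  have H' : forall i, 0 <= w i - m by move=> i; rewrite subr_ge0 leNgt; apply/negP/H.
  have E := psumr_eq0P (fun i _ => H' i) (sumS w wS).
  have : (0 < #|[pred i | w i != m]|)%N by rewrite cd.
  case/card_gt0P => i; rewrite !inE.
  by have := E i isT => /eqP; rewrite subr_eq0 => ->.
have [b wb] : exists b, m < w b.
  apply/not_existsP => H.
  have H' : forall i, 0 <= m - w i by move=> i; rewrite subr_ge0 leNgt; apply/negP/H.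
  have : \sum_i (m - w i) = 0.
    by rewrite -[LHS]opprK -sumrN (eq_bigr (fun i => w i - m)) ?sumS ?oppr0 // => i _; rewrite opprB.
  move/(psumr_eq0P (fun i _ => H' i)) => E.
  have : (0 < #|[pred i | w i != m]|)%N by rewrite cd.
  case/card_gt0P => i; rewrite !inE.
  by have := E i isT => /eqP; rewrite subr_eq0 eq_sym => ->.
have ab : a != b by apply/eqP => ab; move: wa wb; rewrite ab; lra.
pose w' := fun i => if i == a then m else if i == b then w a + w b - m else w i.
have w'a : w' a = m by rewrite /w' eqxx.
have w'b : w' b = w a + w b - m by rewrite /w' eq_sym (negbTE ab) eqxx.
have w'o : forall i, i != a -> i != b -> w' i = w i.
  by move=> i ia ib; rewrite /w' (negbTE ia) (negbTE ib).
have w'0 : forall i, 0 <= w' i.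
  move=> i; rewrite /w'; case: ifP => // _; case: ifP => // _.
  have := w0 a; lra.
have w'S : \sum_i w' i = S.
  rewrite -wS (bigD1 a) //= [X in _ = X](bigD1 a) //=.
  rewrite (bigD1 b) 1?eq_sym //= [X in _ = _ + X](bigD1 b) 1?eq_sym //=.
  rewrite w'a w'b.
  rewrite (eq_bigr w) => [|i /andP[ia ib]]; last by rewrite w'o.
  lra.
apply: (@le_trans _ _ (Psym w')).
  apply: (Psym_swap w w' a b ab w0 w'0) => //.
  - by rewrite w'a w'b; lra.
  - rewrite w'a w'b; nra.
apply: IH => //; rewrite -ltnS -cd; apply: proper_card; apply/properP; split.
  apply/fintype.subsetP => i; rewrite !inE /w'.
  case: (eqVneq i a) => [->|ia]; first by rewrite eqxx.
  case: (eqVneq i b) => [->|ib]; last by [].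
  by move=> _; rewrite gt_eqF.
by exists a; rewrite !inE ?w'a ?eqxx ?lt_eqF.
Qed.

End Mac.

Section Cmod.
Variable R : realType.
Implicit Types z w : R[i].

Lemma cmodE z : cmod z = Normc.normc z. Proof. by case: z. Qed.
Lemma cmod_ge0 z : 0 <= cmod z. Proof. by case: z => a b; rewrite /cmod sqrtr_ge0. Qed.
Lemma cmodM z w : cmod (z * w) = cmod z * cmod w.
Proof. by rewrite !cmodE Normc.normcM. Qed.
Lemma cmod1 : cmod (1 : R[i]) = 1. Proof. by rewrite cmodE Normc.normc1. Qed.
Lemma cmod0 : cmod (0 : R[i]) = 0. Proof. by rewrite cmodE Normc.normc0. Qed.
Lemma cmodD z w : cmod (z + w) <= cmod z + cmod w.
Proof. by rewrite !cmodE le_normcD. Qed.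
Lemma cmod_eq0 z : cmod z = 0 -> z = 0.
Proof. by rewrite cmodE => /Normc.eq0_normc. Qed.
Lemma cmodX z k : cmod (z ^+ k) = cmod z ^+ k.
Proof. by elim: k => [|k IH]; rewrite ?expr0 ?cmod1 // !exprS cmodM IH. Qed.
Lemma cmod_real (r : R) : 0 <= r -> cmod (r%:C)%C = r.
Proof. by move=> r0; rewrite /cmod /= expr0n /= addr0 sqrtr_sqr ger0_norm. Qed.

Lemma cmod_sum (I : finType) (P : pred I) (F : I -> R[i]) :
  cmod (\sum_(i | P i) F i) <= \sum_(i | P i) cmod (F i).
Proof.
elim/big_ind2 : _ => //; first by rewrite cmod0.
by move=> x1 x2 y1 y2 h1 h2; apply: le_trans (cmodD _ _) _; apply: lerD.
Qed.

Lemma cmod_prod (I : eqType) (s : seq I) (F : I -> R[i]) :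
  cmod (\prod_(j <- s) F j) = \prod_(j <- s) cmod (F j).
Proof.
elim: s => [|x s IH]; first by rewrite !big_nil cmod1.
by rewrite !big_cons cmodM IH.
Qed.

End Cmod.

Lemma sum_cons (R : realType) (n k : nat) (G : seq 'I_n -> R) :
  \sum_(i : 'I_n) \sum_(g : k.-tuple 'I_n) G (i :: g)
    = \sum_(s : k.+1.-tuple 'I_n) G s.
Proof.
rewrite pair_big /=.
rewrite (reindex (fun s : k.+1.-tuple 'I_n => (thead s, [tuple of behead s]))) /=.
  by apply: eq_bigr => s _; rewrite [in RHS](tuple_eta s).
exists (fun p : 'I_n * k.-tuple 'I_n => [tuple of p.1 :: p.2]) => [s _ | [i g] _] /=.
  by rewrite -tuple_eta.
by rewrite theadE; congr pair; apply: val_inj.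
Qed.

Section Count.
Variables (n : nat) (e : rel 'I_n) (t : nat).

Lemma set_tuple_eq (C : {set 'I_n}) (s : t.-tuple 'I_n) : #|C| = t ->
  ([set x in s] == C) = all [pred x | x \in C] s && uniq s.
Proof.
move=> Ct; apply/idP/idP.
  move/eqP => E; apply/andP; split.
    by apply/allP => x xs; rewrite /= -E inE.
  apply/card_uniqP; transitivity t; last by rewrite size_tuple.
  by rewrite -cardsE E.
case/andP => al us; rewrite eqEcard; apply/andP; split.
  by apply/fintype.subsetP => x; rewrite inE => xs; exact: (allP al x xs).
by rewrite cardsE (card_uniqP us) size_tuple Ct.
Qed.

Lemma card_T : #|[pred s : t.-tuple 'I_n | [set x in s] \in cliques e t]|
  = (t`! * clique_number e t)%N.
Proof.
rewrite -sum1_card (partition_big (fun s : t.-tuple 'I_n => [set x in s])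
   (fun C => C \in cliques e t)) //=.
rewrite /clique_number mulnC -sum_nat_const.
apply: eq_bigr => C CC; have := CC; rewrite inE => /andP[_ /eqP Ct].
rewrite sum1dep_card; transitivity (#|C| ^_ t)%N; last by rewrite Ct ffactnn.
rewrite -(card_uniq_tuples t [pred x | x \in C]).
apply: eq_card => s; rewrite !inE -(set_tuple_eq _ s Ct).
by case E: ([set x in s] == C); rewrite ?andbF // (eqP E) andbT; move: CC; rewrite inE => ->.
Qed.


Lemma clique_uniq (s : t.-tuple 'I_n) : [set x in s] \in cliques e t -> uniq s.
Proof.
rewrite inE => /andP[_ /eqP c]; apply/card_uniqP; transitivity t.
  by rewrite -cardsE.
by rewrite size_tuple.
Qed.

Lemma complete_clique (hc : forall x y, x != y -> e x y) (s : t.-tuple 'I_n) :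
  ([set x in s] \in cliques e t) = uniq s.
Proof.
rewrite inE.
have -> : is_clique e [set x in s].
  by apply/forall_inP => x _; apply/forall_inP => y _; apply/implyP; exact: hc.
apply/idP/idP => [/eqP c|u].
  apply/card_uniqP; transitivity t; first by rewrite -cardsE.
  by rewrite size_tuple.
by rewrite /= cardsE (card_uniqP u) size_tuple.
Qed.

End Count.

Lemma card_cons_uniq n k (i : 'I_n) :
  #|[pred g : k.-tuple 'I_n | uniq (i :: g)]| = (n.-1) ^_ k.
Proof.
have := card_uniq_tuples k (predC1 i); rewrite cardC1 card_ord => <-.
apply: eq_card => g; rewrite !inE /=; congr (_ && _).
by elim: (tval g) => [|x g' IH] //=; rewrite inE negb_or -IH eq_sym.
Qed.


Lemma eig_bound (R : realType) n k (e : rel 'I_n) (lam : R[i]) :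
  is_eigenvalue k.+1 (clique_tensor R e k.+1) lam ->
  cmod lam ^+ k.+1 <= ((k.+1)%:R / n%:R) ^+ k.+1 * 'C(n, k.+1)%:R
                        * (clique_number e k.+1)%:R ^+ k.
Proof.
case=> x [[i0 xi0] Heig].
pose y := fun i => cmod (x i).
have y0 : forall i, 0 <= y i by move=> i; exact: cmod_ge0.
pose N := \sum_i y i ^+ k.+1.
have Npos : 0 < N.
  have yi0 : 0 < y i0.
    rewrite lt0r cmod_ge0 andbT; apply/eqP => /cmod_eq0 h; by rewrite h eqxx in xi0.
  rewrite /N (bigD1 i0) //=; apply: ltr_wpDr; first by apply: sumr_ge0 => i _; exact: exprn_ge0.
  exact: exprn_gt0.
have n0 : (0 < n)%N by case: n i0 {x xi0 Heig y y0 N Npos e} => [[]|].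
pose F : R := (k`!)%:R.
have F0 : 0 < F by rewrite /F ltr0n fact_gt0.
pose T := [pred s : k.+1.-tuple 'I_n | [set x in s] \in cliques e k.+1].
pose a := fun s : seq 'I_n =>
  if (size s == k.+1) && ([set x in s] \in cliques e k.+1) then F^-1 else 0.
have a0 : forall s, 0 <= a s.
  by move=> s; rewrite /a; case: ifP => // _; rewrite invr_ge0 ltW.
have Aa : forall s, clique_tensor R e k.+1 s = (a s)%:C%C.
  move=> s; rewrite /clique_tensor /a; case: ifP => // _.
  by rewrite /= fmorphV rmorph_nat.
have stepa : forall i, cmod lam * y i ^+ k.+1 <=
    \sum_(g : k.-tuple 'I_n) a (i :: g) * \prod_(j <- i :: g) y j.
  move=> i.
  have H1 : cmod lam * y i ^+ k <=
      \sum_(g : k.-tuple 'I_n) a (i :: g) * \prod_(j <- g) y j.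
    rewrite /y -cmodX -cmodM -Heig /tensor_apply /=.
    apply: le_trans (cmod_sum _ _ _ _) _; apply: ler_sum => g _.
    by rewrite cmodM Aa cmod_real // cmod_prod.
  rewrite exprS mulrCA; apply: le_trans (ler_wpM2l (y0 i) H1) _.
  rewrite mulr_sumr; apply: ler_sum => g _; rewrite big_cons; lra.
have stepa' : cmod lam * N <= F^-1 * \sum_(s | T s) \prod_(j <- s) y j.
  rewrite /N mulr_sumr; apply: le_trans (ler_sum _ (fun i _ => stepa i)) _.
  rewrite (sum_cons R n k (fun s => a s * \prod_(j <- s) y j)) mulr_sumr.
  rewrite [X in _ <= X]big_mkcond /=; apply: ler_sum => s _.
  by rewrite /a size_tuple eqxx /=; case: ifP => _; rewrite ?mul0r ?mulr0.
pose W := \sum_(s | T s) \prod_(j <- s) y j.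
have py0 : forall s : seq 'I_n, 0 <= \prod_(j <- s) y j.
  by move=> s; apply: prodr_ge0 => j _.
have W0 : 0 <= W by apply: sumr_ge0 => s _.
have pm := @power_mean R _ T (fun s => \prod_(j <- s) y j) k (fun s _ => py0 s).
have hb1 : \sum_(s | T s) (\prod_(j <- s) y j) ^+ k.+1
    <= @Psym R n k.+1 (fun j => y j ^+ k.+1).
  rewrite /Psym big_mkcond [X in _ <= X]big_mkcond /=; apply: ler_sum => s _.
  case Ts: (T s).
    by rewrite [_ \in _]Ts (@clique_uniq n e k.+1 s Ts) prodrXl.
  rewrite [_ \in _]Ts; by case: ifP => // _; apply: prodr_ge0 => j _; exact: exprn_ge0.
have hb2 := @maclaurin R n k.+1 (fun j => y j ^+ k.+1) n0 (fun j => exprn_ge0 _ (y0 j)).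
have cT : #|T| = ((k.+1)`! * clique_number e k.+1)%N := card_T n e k.+1.
have key : (cmod lam * N) ^+ k.+1 <= (F^-1 * W) ^+ k.+1.
  apply: lerXn2r; last exact: stepa'.
    by rewrite nnegrE mulr_ge0 ?cmod_ge0 // ltW.
  by rewrite nnegrE mulr_ge0 // invr_ge0 ltW.
rewrite -(ler_pM2r (exprn_gt0 k.+1 Npos)) -exprMn.
apply: (le_trans key); rewrite exprMn.
have F'0 : 0 <= F^-1 ^+ k.+1 by rewrite exprn_ge0 // invr_ge0 ltW.
apply: le_trans (ler_wpM2l F'0 (le_trans pm (ler_wpM2l _ (le_trans hb1 hb2)))) _.
  by rewrite exprn_ge0.
rewrite le_eqVlt; apply/orP; left; apply/eqP.
rewrite cT -bin_ffact factS !natrM -/F.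
have nR : n%:R != 0 :> R by rewrite pnatr_eq0 -lt0n.
have FR : F != 0 by rewrite gt_eqF.
have FkR : F ^+ k != 0 by rewrite expf_neq0.
rewrite !exprMn !exprVn !exprS; field.
by rewrite expf_neq0 // nR FkR -/F FR.
Qed.

Lemma complete_eig (R : realType) n k (e : rel 'I_n)
  (hc : forall x y : 'I_n, x != y -> e x y) (n0 : (0 < n)%N) :
  is_eigenvalue k.+1 (clique_tensor R e k.+1) ('C(n.-1, k)%:R).
Proof.
exists (fun _ => 1); split; first by exists (Ordinal n0); rewrite oner_neq0.
move=> i; rewrite /tensor_apply /= expr1n mulr1.
rewrite (eq_bigr (fun g : k.-tuple 'I_n =>
   if uniq (i :: g) then ((k`!)%:R)^-1 else 0)) => [|g _]; last first.
  rewrite big1_eq mulr1 /clique_tensor /= size_tuple eqxx /=.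
  have := @complete_clique n e k.+1 hc [tuple of i :: g].
  by rewrite /= => ->.
rewrite -big_mkcond /= sumr_const.
rewrite (eq_card (B := [pred g : k.-tuple 'I_n | uniq (i :: g)])) //.
rewrite card_cons_uniq -bin_ffact -[LHS]mulr_natr natrM mulrCA mulVf ?mulr1 //.
Qed.

Theorem lemma6 (R : realType) (t n : nat) (e : rel 'I_n)
  (e_sym : symmetric e) (e_irr : irreflexive e) (ht : (2 <= t)%N) :
  let bound : R :=
    t%:R / n%:R * ('C(n, t)%:R `^ (t%:R)^-1)
      * ((clique_number e t)%:R `^ ((t%:R - 1) / t%:R)) in
  clique_spectral_radius R e t <= bound /\
  ((forall x y : 'I_n, x != y -> e x y) \/ clique_number e t = 0%N ->
     clique_spectral_radius R e t = bound).
Proof.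
case: t ht => [|k] // ht bound.
have k0 : (0 < k)%N by [].
have tR : (k.+1)%:R != 0 :> R by rewrite pnatr_eq0.
have b_ge0 : 0 <= bound.
  by rewrite /bound !mulr_ge0 ?divr_ge0 ?powR_ge0.
have bX : bound ^+ k.+1 = ((k.+1)%:R / n%:R) ^+ k.+1 * 'C(n, k.+1)%:R
                        * (clique_number e k.+1)%:R ^+ k.
  rewrite /bound !exprMn; congr (_ * _ * _).
    rewrite -powR_mulrn ?powR_ge0 // -powRrM mulVf // powRr1 //.
  rewrite -powR_mulrn ?powR_ge0 // -powRrM divfK // -natr1 addrK.
  by rewrite powR_mulrn.
have ub : forall lam, is_eigenvalue k.+1 (clique_tensor R e k.+1) lam ->
    cmod lam <= bound.
  move=> lam H; have := eig_bound R n k e lam H; rewrite -bX.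
  by rewrite ler_pXn2r // nnegrE ?cmod_ge0.
have part1 : clique_spectral_radius R e k.+1 <= bound.
  rewrite /clique_spectral_radius /spectral_radius.
  case: (pselect ([set cmod lam | lam in
      [set lam | is_eigenvalue k.+1 (clique_tensor R e k.+1) lam]] !=set0)%classic)
    => [ne|e0].
    by apply: ge_sup ne _ => y [lam Hl <-]; exact: ub.
  suff -> : ([set cmod lam | lam in
      [set lam | is_eigenvalue k.+1 (clique_tensor R e k.+1) lam]] = set0)%classic.
    by rewrite sup0.
  by apply/seteqP; split => y Hy //; exfalso; apply: e0; exists y.
split => // H.
apply/le_anti; rewrite part1 /=.
case: (posnP n) => [n0|n0].
  have nz : n%:R = 0 :> R by rewrite n0.
  rewrite /bound nz invr0 mulr0 !mul0r /clique_spectral_radius /spectral_radius.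
  suff -> : ([set cmod lam | lam in
      [set lam | is_eigenvalue k.+1 (clique_tensor R e k.+1) lam]] = set0)%classic.
    by rewrite sup0.
  apply/seteqP; split => y // [lam [x [[[i ii] _] _]] _].
  by move: ii; rewrite n0.
have nR : n%:R != 0 :> R by rewrite pnatr_eq0 -lt0n.
have [lam0 [Hl0 cl0]] : exists lam0, is_eigenvalue k.+1 (clique_tensor R e k.+1) lam0
    /\ cmod lam0 = bound.
  case: H => [hc|c0].
    exists ('C(n.-1,k)%:R); split; first exact: complete_eig hc n0.
    have -> : ('C(n.-1,k)%:R : R[i]) = (('C(n.-1,k)%:R : R)%:C)%C by rewrite rmorph_nat.
    rewrite cmod_real ?ler0n //.
    have cE : clique_number e k.+1 = 'C(n, k.+1).
      rewrite /clique_number.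
      have -> : cliques e k.+1 = [set A : {set 'I_n} | #|A| == k.+1].
        apply/setP => A; rewrite !inE.
        have -> // : is_clique e A.
        by apply/forall_inP => x _; apply/forall_inP => y _; apply/implyP; exact: hc.
      by rewrite card_draws card_ord.
    rewrite /bound cE -mulrA -powRD; last first.
      have -> : (k.+1)%:R^-1 + ((k.+1)%:R - 1) / (k.+1)%:R = 1 :> R by field.
      by rewrite oner_eq0.
    have -> : (k.+1)%:R^-1 + ((k.+1)%:R - 1) / (k.+1)%:R = 1 :> R by field.
    rewrite powRr1 ?ler0n //.
    apply: (mulfI nR); rewrite -natrM mul_bin_diag natrM; field.
    by rewrite nR.
  exists 0; split.
    exists (fun _ => 1); split; first by exists (Ordinal n0); rewrite oner_neq0.
    move=> i; rewrite mul0r /tensor_apply big1 // => g _.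
    by rewrite /clique_tensor (cards0_eq c0) finset.in_set0 andbF mul0r.
  rewrite cmod0 /bound c0 powR0 ?mulr0 //.
  by rewrite -natr1 addrK mulf_neq0 ?invr_eq0 // pnatr_eq0 -lt0n.
rewrite -cl0; apply: sup_upper_bound; last by exists lam0.
split; first by exists (cmod lam0), lam0.
by exists bound => y [lam Hl <-]; exact: ub.
Qed.
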